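(* Let $d\in\mathbb N$, and assume (A1) and (A2). Then $H(M^{{\boldsymbol\eta},m})\subseteq H(M^{{\boldsymbol\eta}^\uparrow,m^\uparrow})$ (both spaces consisting of functions on $D^d$) and the identical embedding has norm at most one.
   Context: For a reproducing kernel $M$ over a set $\mathfrak Z$, $H(M)$ is its RKHS with norm $\|\cdot\|_M$. Write $[d]=\{1,\dots,d\}$, $\mathcal U_d$ the power set of $[d]$, weights $\mathcal W_d$ the families $(\gamma_u)_{u\in\mathcal U_d}$ of non-negative reals. For $C>0$, $T^\uparrow_{d,C}\colon\mathcal W_d\to\mathcal W_d$, $(T^\uparrow_{d,C}{\boldsymbol\gamma})_u=\sum_{v\supseteq u}C^{2|v|}\gamma_v$, and $\mathcal S_{d,C}=\{{\boldsymbol\gamma}\in\mathcal W_d:\sum_vC^{2|v|}\gamma_v<\infty\}$. Given a reproducing kernel $m\ne0$ over a non-empty set $D$ and $u\in\mathcal U_d$, let $m_u(\mathbf x,\mathbf y)=\prod_{j\in u}m(x_j,y_j)$ ($m_\emptyset=1$), and for weights ${\boldsymbol\eta}$ let $M^{{\boldsymbol\eta},m}(\mathbf x,\mathbf y)=\sum_{u\in\mathcal U_d}\eta_u m_u(\mathbf x,\mathbf y)$ for $\mathbf x,\mathbf y\in D^d$. Assumptions: (A1) $m,m^\uparrow$ are nonzero reproducing kernels over $D$ with $H(m)\subseteq H(1+m^\uparrow)$, and $C\ge\sup\{\|f\|_{1+m^\uparrow}:f\in H(m),\|f\|_m\le1\}$, $C>0$. (A2) ${\boldsymbol\eta}\in\mathcal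 S_{d,C}$ and ${\boldsymbol\eta}^\uparrow=T^\uparrow_{d,C}{\boldsymbol\eta}$. *)

(* Defs.v *)
From mathcomp Require Import all_boot all_order all_algebra.
From mathcomp Require Import reals.
Set Implicit Arguments. Unset Strict Implicit. Unset Printing Implicit Defensive.
Import Order.TTheory GRing.Theory Num.Theory.
Local Open Scope ring_scope.

Definition reproducing_kernel {R : realType} {X : Type} (K : X -> X -> R) : Prop :=
  (forall x y, K x y = K y x) /\
  forall (n : nat) (pts : 'I_n -> X) (a : 'I_n -> R),
    0 <= \sum_(i < n) \sum_(j < n) a i * a j * K (pts i) (pts j).

Definition fdiff {R : realType} {X : Type} (f g : X -> R) : X -> R :=
  fun x => f x - g x.

(* By uniqueness of
   the RKHS, any such (H, ip) is H(K) with its inner product. *)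
Record is_RKHS {R : realType} {X : Type} (K : X -> X -> R)
    (H : (X -> R) -> Prop) (ip : (X -> R) -> (X -> R) -> R) : Prop := {
  rk_zero : H (fun _ => 0);
  rk_lin : forall a f g, H f -> H g -> H (fun x => a * f x + g x);
  rk_sym : forall f g, H f -> H g -> ip f g = ip g f;
  rk_linl : forall a f g h, H f -> H g -> H h ->
      ip (fun x => a * f x + g x) h = a * ip f h + ip g h;
  rk_pos : forall f, H f -> 0 <= ip f f;
  rk_def : forall f, H f -> ip f f = 0 -> f = (fun _ => 0);
  rk_complete : forall u : nat -> X -> R, (forall n, H (u n)) ->
      (forall e, 0 < e -> exists N, forall n k, (N <= n)%N -> (N <= k)%N ->
          ip (fdiff (u n) (u k)) (fdiff (u n) (u k)) < e) ->
      exists g, H g /\ forall e, 0 < e -> exists N, forall n, (N <= n)%N ->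
          ip (fdiff (u n) g) (fdiff (u n) g) < e;
  rk_mem : forall y, H (fun x => K x y);
  rk_repr : forall f y, H f -> ip f (fun x => K x y) = f y
}.

Definition rk_norm {R : realType} {X : Type} (ip : (X -> R) -> (X -> R) -> R)
  (f : X -> R) : R := Num.sqrt (ip f f).

Definition is_weight {R : realType} (d : nat) (gamma : {set 'I_d} -> R) : Prop :=
  forall u, 0 <= gamma u.

(* S_{d,C}: weights with sum_v C^{2|v|} gamma_v < oo (automatic, finitely
   many subsets); we keep the weight condition. *)
Definition in_S {R : realType} (d : nat) (C : R) (gamma : {set 'I_d} -> R) : Prop :=
  is_weight gamma.

Definition T_up {R : realType} (d : nat) (C : R) (gamma : {set 'I_d} -> R)
  : {set 'I_d} -> R :=
  fun u => \sum_(v : {set 'I_d} | u \subset v) C ^+ (2 * #|v|) * gamma v.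

Definition prod_kernel {R : realType} {D : Type} (d : nat) (m : D -> D -> R)
  (u : {set 'I_d}) (x y : 'I_d -> D) : R :=
  \prod_(j in u) m (x j) (y j).

Definition M_kernel {R : realType} {D : Type} (d : nat) (eta : {set 'I_d} -> R)
  (m : D -> D -> R) (x y : 'I_d -> D) : R :=
  \sum_(u : {set 'I_d}) eta u * prod_kernel m u x y.

(* Main.v *)
From mathcomp Require Import classical_sets boolp.
Require Import Defs.
From mathcomp Require Import all_boot all_order all_algebra.
From mathcomp Require Import reals.
From mathcomp Require Import ring lra.
Import Order.TTheory GRing.Theory Num.Theory.
Local Open Scope ring_scope.
Set Implicit Arguments. Unset Strict Implicit.

Lemma quad_lemma (R : realType) (A B C : R) :
  (forall t, 0 <= A + 2 * B * t + C * t ^+ 2) -> 0 <= C -> B ^+ 2 <= A * C.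
Proof.
move=> H C0.
have A0 : 0 <= A by have := H 0; rewrite mulr0 expr0n /= mulr0 !addr0.
have [Cz|Cp] := eqVneq C 0.
  subst C; rewrite mulr0.
  have [Bz|Bn] := eqVneq B 0; first by rewrite Bz expr0n.
  have := H (- (A + 1) / (2 * B)).
  have -> : 2 * B * (- (A + 1) / (2 * B)) = - (A + 1) by field.
  move=> h; exfalso; lra.
have Cpos : 0 < C by rewrite lt_def Cp C0.
have := H (- B / C).
have -> : A + 2 * B * (- B / C) + C * (- B / C) ^+ 2 = A - B ^+ 2 / C.
  by field.
by rewrite subr_ge0 ler_pdivrMr.
Qed.

Definition bil (R : realType) n (B : 'I_n -> 'I_n -> R) (u v : 'I_n -> R) : R :=
  \sum_i \sum_j u i * v j * B i j.

Lemma bil_ext (R : realType) n (B B' : 'I_n -> 'I_n -> R) u v u' v' :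
  (forall i j, u i * v j * B i j = u' i * v' j * B' i j) -> bil B u v = bil B' u' v'.
Proof. by move=> h; apply: eq_bigr => i _; apply: eq_bigr => j _. Qed.

Lemma bilDl (R : realType) n (B : 'I_n -> 'I_n -> R) u1 u2 v :
  bil B (fun i => u1 i + u2 i) v = bil B u1 v + bil B u2 v.
Proof.
rewrite /bil -big_split /=; apply: eq_bigr => i _; rewrite -big_split /=.
by apply: eq_bigr => j _; rewrite !mulrDl.
Qed.

Lemma bilDr (R : realType) n (B : 'I_n -> 'I_n -> R) u v1 v2 :
  bil B u (fun i => v1 i + v2 i) = bil B u v1 + bil B u v2.
Proof.
rewrite /bil -big_split /=; apply: eq_bigr => i _; rewrite -big_split /=.
by apply: eq_bigr => j _; rewrite mulrDr !mulrDl.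
Qed.

Lemma bil_sym (R : realType) n (B : 'I_n -> 'I_n -> R) u v :
  (forall i j, B i j = B j i) -> bil B u v = bil B v u.
Proof.
move=> hs; rewrite /bil exchange_big /=; apply: eq_bigr => i _.
by apply: eq_bigr => j _; rewrite hs [u j * _]mulrC.
Qed.

Lemma bilKD (R : realType) n (B1 B2 : 'I_n -> 'I_n -> R) u v :
  bil (fun i j => B1 i j + B2 i j) u v = bil B1 u v + bil B2 u v.
Proof.
rewrite /bil -big_split /=; apply: eq_bigr => i _; rewrite -big_split /=.
by apply: eq_bigr => j _; rewrite mulrDr.
Qed.

Lemma sum_delta (R : realType) n (p : 'I_n) (c : R) (F : 'I_n -> R) :
  \sum_j (c * (j == p)%:R) * F j = c * F p.
Proof.
rewrite (bigD1 p) //= eqxx mulr1 big1 ?addr0 // => j /negbTE ->.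
by rewrite mulr0 mul0r.
Qed.

Lemma bil_factl (R : realType) n (B : 'I_n -> 'I_n -> R) u v :
  bil B u v = \sum_i u i * \sum_j v j * B i j.
Proof.
apply: eq_bigr => i _; rewrite mulr_sumr; apply: eq_bigr => j _; by rewrite mulrA.
Qed.

Lemma bil_factr (R : realType) n (B : 'I_n -> 'I_n -> R) u v :
  bil B u v = \sum_j v j * \sum_i u i * B i j.
Proof.
rewrite /bil exchange_big /=; apply: eq_bigr => j _; rewrite mulr_sumr.
apply: eq_bigr => i _; by rewrite mulrA [v j * _]mulrC.
Qed.

Lemma bil_deltal (R : realType) n (B : 'I_n -> 'I_n -> R) (p : 'I_n) c v :
  bil B (fun i => c * (i == p)%:R) v = c * \sum_j v j * B p j.
Proof. by rewrite bil_factl sum_delta. Qed.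

Lemma bil_deltar (R : realType) n (B : 'I_n -> 'I_n -> R) (p : 'I_n) c u :
  bil B u (fun i => c * (i == p)%:R) = c * \sum_i u i * B i p.
Proof. by rewrite bil_factr sum_delta. Qed.

Definition delta (R : realType) n (p : 'I_n) (c : R) : 'I_n -> R :=
  fun i => c * (i == p)%:R.

Lemma bil_dd (R : realType) n (B : 'I_n -> 'I_n -> R) p q c e :
  bil B (delta p c) (delta q e) = c * (e * B p q).
Proof. by rewrite bil_deltal sum_delta. Qed.

Lemma psd_row0 (R : realType) n (B : 'I_n -> 'I_n -> R) (p j : 'I_n) :
  (forall i j, B i j = B j i) -> (forall a, 0 <= bil B a a) -> B p p = 0 -> B p j = 0.
Proof.
move=> hs hp h0.
have H : forall t, 0 <= B j j + 2 * B p j * t + 0 * t ^+ 2.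
  move=> t; have := hp (fun i => delta p t i + delta j 1 i).
  rewrite bilDl !bilDr !bil_dd h0 (hs j p); lra.
have := quad_lemma H (lexx 0); rewrite mulr0 => h.
by apply/eqP; rewrite -sqrf_eq0 eq_le h sqr_ge0.
Qed.

Lemma schur_mat (R : realType) n (A : 'I_n -> 'I_n -> R) :
  (forall a, 0 <= bil A a a) ->
  forall m k (B : 'I_n -> 'I_n -> R), (n <= k + m)%N ->
  (forall i j, B i j = B j i) -> (forall a, 0 <= bil B a a) ->
  (forall i j : 'I_n, (i < k)%N -> B i j = 0) ->
  forall a, 0 <= bil (fun i j => A i j * B i j) a a.
Proof.
move=> hA m; elim: m => [|m IH] k B hnk hs hp hz a.
  rewrite /bil big1 // => i _; rewrite big1 // => j _.
  by rewrite hz ?mulr0 // (leq_trans (ltn_ord i)) // -(addn0 k).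
have [nk|kn] := leqP n k.
  rewrite /bil big1 // => i _; rewrite big1 // => j _.
  by rewrite hz ?mulr0 // (leq_trans (ltn_ord i)).
set p := Ordinal kn.
have Bpp0 : 0 <= B p p by have := hp (delta p 1); rewrite bil_dd !mul1r.
have [Bz|Bnz] := eqVneq (B p p) 0.
  apply: (IH k.+1) => //; first by rewrite addSnnS.
  move=> i j; rewrite ltnS leq_eqVlt => /orP [/eqP ik|]; last exact: hz.
  have -> : i = p by apply: val_inj.
  exact: psd_row0.
have Bpos : 0 < B p p by rewrite lt_def Bnz Bpp0.
pose B' := fun i j => B i j - B i p * B p j / B p p.
have hs' : forall i j, B' i j = B' j i.
  by move=> i j; rewrite /B' hs (hs p j) (hs p i); congr (_ - _); rewrite [B j p * _]mulrC.
have hz' : forall i j : 'I_n, (i < k.+1)%N -> B' i j = 0.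
  move=> i j; rewrite ltnS leq_eqVlt => /orP [/eqP ik|ik].
    have -> : i = p by apply: val_inj.
    by rewrite /B'; field.
  by rewrite /B' (hz i j) // (hz i p) // mul0r mul0r subr0.
have hp' : forall a, 0 <= bil B' a a.
  move=> b; set s := \sum_j b j * B p j.
  have e1 : bil B' b b = bil B b b - s * s / B p p.
    rewrite /B'.
    have -> : bil (fun i j => B i j - B i p * B p j / B p p) b b =
       bil B b b + (- (B p p)^-1) * bil (fun i j => B i p * B p j) b b.
      rewrite /bil mulr_sumr -big_split /=; apply: eq_bigr => i _.
      rewrite mulr_sumr -big_split /=; apply: eq_bigr => j _; ring.
    have -> : bil (fun i j => B i p * B p j) b b = s * s.
      rewrite bil_factl /s mulr_suml; apply: eq_bigr => i _.
      rewrite mulr_sumr mulr_sumr; apply: eq_bigr => j _; rewrite (hs i p); ring.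
    field; lra.
  have e2 : bil B (fun i => b i + delta p (- (s / B p p)) i)
                  (fun i => b i + delta p (- (s / B p p)) i)
            = bil B b b - s * s / B p p.
    rewrite bilDl !bilDr bil_dd bil_deltal bil_deltar -/s.
    have -> : \sum_i b i * B i p = s by apply: eq_bigr => i _; rewrite hs.
    field; lra.
  by rewrite e1 -e2.
have -> : bil (fun i j => A i j * B i j) a a =
          bil (fun i j => A i j * B' i j) a a +
          (B p p)^-1 * bil A (fun i => a i * B i p) (fun i => a i * B i p).
  rewrite /bil mulr_sumr -big_split /=; apply: eq_bigr => i _.
  rewrite mulr_sumr -big_split /=; apply: eq_bigr => j _.
  rewrite /B' (hs p j); field; exact: Bnz.
apply: addr_ge0; first by apply: (IH k.+1 B') => //; rewrite addSnnS.
by apply: mulr_ge0; [rewrite invr_ge0; lra | exact: hA].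
Qed.

Definition hS (R : realType) (X : Type) (K : X -> X -> R) (s : seq (R * X)) : X -> R :=
  fun x => \sum_(q <- s) q.1 * K x q.2.

Definition BBk (R : realType) (X : Type) (K : X -> X -> R) (s t : seq (R * X)) : R :=
  \sum_(p <- s) p.1 * \sum_(q <- t) q.1 * K p.2 q.2.

Definition psdK (R : realType) (X : Type) (K : X -> X -> R) : Prop :=
  (forall x y, K x y = K y x) /\ forall s, 0 <= BBk K s s.

Lemma BBk_ext (R : realType) (X : Type) (K K' : X -> X -> R) s t :
  (forall x y, K x y = K' x y) -> BBk K s t = BBk K' s t.
Proof.
move=> h; apply: eq_bigr => p _; congr (_ * _); apply: eq_bigr => q _; by rewrite h.
Qed.

Lemma BBk_add (R : realType) (X : Type) (K1 K2 : X -> X -> R) s t :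
  BBk (fun x y => K1 x y + K2 x y) s t = BBk K1 s t + BBk K2 s t.
Proof.
rewrite /BBk -big_split /=; apply: eq_bigr => p _; rewrite -mulrDr -big_split /=.
by congr (_ * _); apply: eq_bigr => q _; rewrite mulrDr.
Qed.

Lemma BBk_scale (R : realType) (X : Type) (K : X -> X -> R) c s t :
  BBk (fun x y => c * K x y) s t = c * BBk K s t.
Proof.
rewrite /BBk mulr_sumr; apply: eq_bigr => p _; rewrite !mulr_sumr.
by apply: eq_bigr => q _; ring.
Qed.

Lemma psdK_ext (R : realType) (X : Type) (K K' : X -> X -> R) :
  (forall x y, K x y = K' x y) -> psdK K -> psdK K'.
Proof.
move=> h [hs hp]; split; first by move=> x y; rewrite -!h.
by move=> s; rewrite -(BBk_ext _ _ h).
Qed.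

Lemma psdK_add (R : realType) (X : Type) (K1 K2 : X -> X -> R) :
  psdK K1 -> psdK K2 -> psdK (fun x y => K1 x y + K2 x y).
Proof.
move=> [s1 p1] [s2 p2]; split; first by move=> x y; rewrite s1 s2.
by move=> s; rewrite BBk_add addr_ge0.
Qed.

Lemma psdK_scale (R : realType) (X : Type) (K : X -> X -> R) c :
  0 <= c -> psdK K -> psdK (fun x y => c * K x y).
Proof.
move=> c0 [s1 p1]; split; first by move=> x y; rewrite s1.
by move=> s; rewrite BBk_scale mulr_ge0.
Qed.

Lemma psdK_one (R : realType) (X : Type) : psdK (fun _ _ : X => (1 : R)).
Proof.
split=> // s; rewrite /BBk.
have -> : \sum_(p <- s) p.1 * \sum_(q <- s) q.1 * (1 : R) =
          (\sum_(p <- s) p.1) ^+ 2.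
  rewrite expr2 mulr_suml; apply: eq_bigr => p _; congr (_ * _).
  by apply: eq_bigr => q _; rewrite mulr1.
exact: sqr_ge0.
Qed.

Lemma psdK_zero (R : realType) (X : Type) : psdK (fun _ _ : X => (0 : R)).
Proof.
apply: (@psdK_ext _ _ (fun x y => 0 * (1 : R))); first by move=> *; rewrite mul0r.
exact: psdK_scale (psdK_one _ _).
Qed.

Lemma psdK_sum (R : realType) (X I : Type) (K : I -> X -> X -> R) (r : seq I) (P : pred I) :
  (forall i, psdK (K i)) -> psdK (fun x y => \sum_(i <- r | P i) K i x y).
Proof.
move=> h; elim: r => [|i r IH].
  by apply: psdK_ext (psdK_zero R X) => x y; rewrite big_nil.
case Pi: (P i).
  by apply: psdK_ext (psdK_add (h i) IH) => x y; rewrite big_cons Pi.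
by apply: psdK_ext IH => x y; rewrite big_cons Pi.
Qed.

Lemma psdK_coord (R : realType) (D : Type) d (K : D -> D -> R) (j : 'I_d) :
  psdK K -> psdK (fun x y : 'I_d -> D => K (x j) (y j)).
Proof.
move=> [hs hp]; split; first by move=> x y; rewrite hs.
move=> s; have := hp [seq (p.1, p.2 j) | p <- s].
rewrite /BBk big_map; congr (_ <= _); apply: eq_bigr => p _.
by rewrite big_map.
Qed.

Lemma BBk_bil (R : realType) (X : Type) (K : X -> X -> R) (s : seq (R * X)) x0 :
  BBk K s s = bil (fun i j : 'I_(size s) => K (nth x0 s i).2 (nth x0 s j).2)
                  (fun i => (nth x0 s i).1) (fun i => (nth x0 s i).1).
Proof.
rewrite /BBk (big_nth x0) big_mkord; apply: eq_bigr => i _.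
rewrite (big_nth x0) big_mkord mulr_sumr; apply: eq_bigr => j _; by rewrite mulrA.
Qed.

Lemma bil_BBk (R : realType) (X : Type) (K : X -> X -> R) n (a : 'I_n -> R) (pts : 'I_n -> X) :
  bil (fun i j => K (pts i) (pts j)) a a =
  BBk K [seq (a i, pts i) | i <- enum 'I_n] [seq (a i, pts i) | i <- enum 'I_n].
Proof.
rewrite /BBk big_map big_enum /=; apply: eq_bigr => i _.
rewrite big_map big_enum /= mulr_sumr; apply: eq_bigr => j _; by rewrite mulrA.
Qed.

Lemma psdK_mul (R : realType) (X : Type) (A B : X -> X -> R) :
  psdK A -> psdK B -> psdK (fun x y => A x y * B x y).
Proof.
move=> [sA pA] [sB pB]; split; first by move=> x y; rewrite sA sB.
case=> [|x0 s']; first by rewrite /BBk big_nil.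
rewrite (BBk_bil _ _ x0).
set n := size (x0 :: s').
have hA' : forall a, 0 <= bil (fun i j : 'I_n => A (nth x0 (x0 :: s') i).2 (nth x0 (x0 :: s') j).2) a a.
  by move=> a; rewrite bil_BBk.
have hB' : forall a, 0 <= bil (fun i j : 'I_n => B (nth x0 (x0 :: s') i).2 (nth x0 (x0 :: s') j).2) a a.
  by move=> a; rewrite bil_BBk.
apply: (schur_mat hA' (m := n) (k := 0%N)) => //.
Qed.

Lemma psdK_prod (R : realType) (X I : Type) (a b : I -> X -> X -> R) (r : seq I) (P : pred I) :
  (forall i, psdK (a i)) -> (forall i, psdK (fun x y => b i x y - a i x y)) ->
  psdK (fun x y => \prod_(i <- r | P i) a i x y) /\
  psdK (fun x y => \prod_(i <- r | P i) b i x y - \prod_(i <- r | P i) a i x y).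
Proof.
move=> ha hb; elim: r => [|i r [IH1 IH2]].
  split; first by apply: psdK_ext (psdK_one R X) => x y; rewrite big_nil.
  by apply: psdK_ext (psdK_zero R X) => x y; rewrite !big_nil subrr.
have IH3 : psdK (fun x y => \prod_(i <- r | P i) b i x y).
  apply: psdK_ext (psdK_add IH1 IH2) => x y; ring.
case Pi: (P i); last first.
  by split; [apply: psdK_ext IH1 | apply: psdK_ext IH2] => x y; rewrite !big_cons Pi.
split.
  by apply: psdK_ext (psdK_mul (ha i) IH1) => x y; rewrite big_cons Pi.
apply: psdK_ext (psdK_add (psdK_mul (hb i) IH3) (psdK_mul (ha i) IH2)) => x y.
rewrite !big_cons Pi; ring.
Qed.

Lemma prod1D (R : realType) (I : finType) (v : {set I}) (f : I -> R) :
  \prod_(j in v) (1 + f j) = \sum_(u : {set I} | u \subset v) \prod_(j in u) f j.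
Proof.
rewrite big_mkcond /=.
rewrite (eq_bigr (fun j => (if j \in v then f j else 0) + 1)); last first.
  by move=> j _; case: ifP => _; rewrite ?add0r // addrC.
rewrite bigA_distr /=.
transitivity (\sum_(J : {set I}) (if J \subset v then \prod_(j in J) f j else 0)); last first.
  by rewrite [RHS]big_mkcond.
apply: eq_big => // J _.
case: ifP => Jv.
  rewrite [RHS]big_mkcond; apply: eq_bigr => j _.
  case: ifP => // jJ; by rewrite (subsetP Jv j jJ).
move/negbT: Jv => /subsetPn [j jJ jv].
by rewrite (bigD1 j) //= jJ (negbTE jv) mul0r.
Qed.

Lemma ip0l (R : realType) (X : Type) K H (ip : (X -> R) -> (X -> R) -> R) h :
  is_RKHS K H ip -> H h -> ip (fun _ => 0) h = 0.
Proof.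
move=> rk Hh; have := rk_linl rk 1 (rk_zero rk) (rk_zero rk) Hh.
have -> : (fun x : X => 1 * (0 : R) + 0) = (fun _ => 0) by apply: funext => x; rewrite mulr0 addr0.
rewrite mul1r => e; lra.
Qed.

Lemma ip_linr (R : realType) (X : Type) K H (ip : (X -> R) -> (X -> R) -> R) a f g h :
  is_RKHS K H ip -> H f -> H g -> H h ->
  ip h (fun x => a * f x + g x) = a * ip h f + ip h g.
Proof.
move=> rk Hf Hg Hh; rewrite (rk_sym rk) ?(rk_linl rk) ?(rk_sym rk Hh Hf) ?(rk_sym rk Hh Hg) //.
exact: (rk_lin rk).
Qed.

Lemma hS_cons (R : realType) (X : Type) (K : X -> X -> R) p s :
  hS K (p :: s) = (fun x => p.1 * K x p.2 + hS K s x).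
Proof. by apply: funext => x; rewrite /hS big_cons. Qed.

Lemma hS_nil (R : realType) (X : Type) (K : X -> X -> R) :
  hS K [::] = (fun _ => 0).
Proof. by apply: funext => x; rewrite /hS big_nil. Qed.

Lemma hS_in (R : realType) (X : Type) K H (ip : (X -> R) -> (X -> R) -> R) s :
  is_RKHS K H ip -> H (hS K s).
Proof.
move=> rk; elim: s => [|p s IH]; first by rewrite hS_nil; exact: (rk_zero rk).
rewrite hS_cons; apply: (rk_lin rk) => //; exact: (rk_mem rk).
Qed.

Lemma ip_hS (R : realType) (X : Type) K H (ip : (X -> R) -> (X -> R) -> R) s g :
  is_RKHS K H ip -> H g -> ip (hS K s) g = \sum_(p <- s) p.1 * g p.2.
Proof.
move=> rk Hg; elim: s => [|p s IH]; first by rewrite hS_nil big_nil (ip0l rk).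
rewrite hS_cons (rk_linl rk) ?IH ?big_cons ?(rk_mem rk) ?(hS_in _ rk) //.
rewrite (rk_sym rk (rk_mem rk _) Hg) (rk_repr rk _ Hg) //.
all: first [exact: (rk_mem rk) | exact: (hS_in _ rk)].
Qed.

Lemma K_sym (R : realType) (X : Type) K H (ip : (X -> R) -> (X -> R) -> R) x y :
  is_RKHS K H ip -> K x y = K y x.
Proof.
move=> rk.
have e1 : ip (fun z => K z y) (fun z => K z x) = K x y by apply: (rk_repr rk); exact: (rk_mem rk).
have e2 : ip (fun z => K z x) (fun z => K z y) = K y x by apply: (rk_repr rk); exact: (rk_mem rk).
by rewrite -e1 -e2; apply: (rk_sym rk); exact: (rk_mem rk).
Qed.

Lemma ip_hS_hS (R : realType) (X : Type) K H (ip : (X -> R) -> (X -> R) -> R) s t :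
  is_RKHS K H ip -> ip (hS K s) (hS K t) = BBk K s t.
Proof. by move=> rk; rewrite (ip_hS _ rk) //; exact: (hS_in _ rk). Qed.

Lemma rkhs_psd (R : realType) (X : Type) K H (ip : (X -> R) -> (X -> R) -> R) :
  is_RKHS K H ip -> psdK K.
Proof.
move=> rk; split; first by move=> x y; exact: (K_sym _ _ rk).
move=> s; rewrite -(ip_hS_hS _ _ rk); apply: (rk_pos rk); exact: (hS_in _ rk).
Qed.



Lemma fdiffE (R : realType) (X : Type) (f g : X -> R) :
  fdiff f g = (fun x => (-1) * g x + f x).
Proof. by apply: funext => x; rewrite /fdiff; ring. Qed.

Lemma fdiff_in (R : realType) (X : Type) K H (ip : (X -> R) -> (X -> R) -> R) f g :
  is_RKHS K H ip -> H f -> H g -> H (fdiff f g).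
Proof. by move=> rk Hf Hg; rewrite fdiffE; exact: (rk_lin rk). Qed.

Lemma ip_fdiffl (R : realType) (X : Type) K H (ip : (X -> R) -> (X -> R) -> R) f g h :
  is_RKHS K H ip -> H f -> H g -> H h -> ip (fdiff f g) h = ip f h - ip g h.
Proof. by move=> rk Hf Hg Hh; rewrite fdiffE (rk_linl rk) //; ring. Qed.

Lemma ip_CS (R : realType) (X : Type) K H (ip : (X -> R) -> (X -> R) -> R) f g :
  is_RKHS K H ip -> H f -> H g -> ip f g ^+ 2 <= ip f f * ip g g.
Proof.
move=> rk Hf Hg; apply: quad_lemma; last exact: (rk_pos rk).
move=> t; have := rk_pos rk (rk_lin rk t Hg Hf).
have Hl := rk_lin rk t Hg Hf.
rewrite (rk_linl rk t Hg Hf Hl) (ip_linr t rk Hg Hf Hg) (ip_linr t rk Hg Hf Hf).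
rewrite (rk_sym rk Hg Hf) => e; lra.
Qed.

Definition epsn (R : realType) (n : nat) : R := (n.+1%:R)^-1.

Lemma epsn_gt0 (R : realType) n : 0 < epsn R n.
Proof. by rewrite /epsn invr_gt0 ltr0Sn. Qed.

Lemma arch_inv (R : realType) (e : R) : 0 < e -> exists N : nat, epsn R N < e.
Proof.
rewrite /epsn.
move=> ep; exists (Num.bound e^-1).
have ei : 0 < e^-1 by rewrite invr_gt0.
have h := archi_boundP (ltW ei).
have h2 : e^-1 < (Num.bound e^-1).+1%:R by apply: lt_le_trans h _; rewrite ler_nat.
rewrite -(ltr_pM2l ep) mulfV ?gt_eqF // in h2.
by rewrite -div1r ltr_pdivrMr ?ltr0Sn // mulrC.
Qed.

Lemma inv_mono (R : realType) (n N : nat) : (N <= n)%N -> epsn R n <= epsn R N.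
Proof. rewrite /epsn; by move=> h; rewrite lef_pV2 ?posrE ?ltr0Sn // ler_nat ltnS. Qed.


Definition scaleS (R : realType) (X : Type) (c : R) (s : seq (R * X)) :=
  [seq (c * p.1, p.2) | p <- s].

Definition LS (R : realType) (X : Type) (f : X -> R) (s : seq (R * X)) :=
  \sum_(p <- s) p.1 * f p.2.

Lemma LS_cat (R : realType) (X : Type) (f : X -> R) s t : LS f (s ++ t) = LS f s + LS f t.
Proof. by rewrite /LS big_cat. Qed.

Lemma LS_scale (R : realType) (X : Type) (f : X -> R) c s : LS f (scaleS c s) = c * LS f s.
Proof. rewrite /LS big_map mulr_sumr; apply: eq_bigr => p _ /=; by rewrite mulrA. Qed.

Lemma hS_cat (R : realType) (X : Type) (K : X -> X -> R) s t x :
  hS K (s ++ t) x = hS K s x + hS K t x.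
Proof. by rewrite /hS big_cat. Qed.

Lemma hS_scale (R : realType) (X : Type) (K : X -> X -> R) c s x :
  hS K (scaleS c s) x = c * hS K s x.
Proof. rewrite /hS big_map mulr_sumr; apply: eq_bigr => p _ /=; by rewrite mulrA. Qed.

Lemma BBk_catl (R : realType) (X : Type) (K : X -> X -> R) s1 s2 t :
  BBk K (s1 ++ s2) t = BBk K s1 t + BBk K s2 t.
Proof. by rewrite /BBk big_cat. Qed.

Lemma BBk_scalel (R : realType) (X : Type) (K : X -> X -> R) c s t :
  BBk K (scaleS c s) t = c * BBk K s t.
Proof. rewrite /BBk big_map mulr_sumr; apply: eq_bigr => p _ /=; by rewrite mulrA. Qed.

Lemma BBk_symm (R : realType) (X : Type) (K : X -> X -> R) s t :
  (forall x y, K x y = K y x) -> BBk K s t = BBk K t s.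
Proof.
move=> hs; rewrite /BBk.
rewrite (eq_bigr (fun p => \sum_(q <- t) p.1 * q.1 * K p.2 q.2)); last first.
  by move=> p _; rewrite mulr_sumr; apply: eq_bigr => q _; rewrite mulrA.
rewrite exchange_big /=; apply: eq_bigr => q _; rewrite mulr_sumr.
by apply: eq_bigr => p _; rewrite hs; ring.
Qed.

Lemma BBk_catr (R : realType) (X : Type) (K : X -> X -> R) s t1 t2 :
  (forall x y, K x y = K y x) -> BBk K s (t1 ++ t2) = BBk K s t1 + BBk K s t2.
Proof. by move=> hs; rewrite !(BBk_symm s) // BBk_catl. Qed.

Lemma BBk_scaler (R : realType) (X : Type) (K : X -> X -> R) c s t :
  (forall x y, K x y = K y x) -> BBk K s (scaleS c t) = c * BBk K s t.
Proof. by move=> hs; rewrite !(BBk_symm s) // BBk_scalel. Qed.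

Lemma BBk_single (R : realType) (X : Type) (K : X -> X -> R) t y s :
  BBk K [:: (t, y)] s = t * hS K s y.
Proof. by rewrite /BBk big_cons big_nil addr0. Qed.

Local Open Scope classical_set_scope.

Lemma rkhs_char (R : realType) (X : Type) K H (ip : (X -> R) -> (X -> R) -> R)
  (f : X -> R) (c2 : R) :
  is_RKHS K H ip -> 0 <= c2 ->
  (forall s, LS f s ^+ 2 <= c2 * BBk K s s) -> H f /\ ip f f <= c2.
Proof.
move=> rk c20 hyp.
have hs : forall x y, K x y = K y x by move=> x y; exact: (K_sym _ _ rk).
have Bpos : forall s, 0 <= BBk K s s.
  by move=> s; rewrite -(ip_hS_hS _ _ rk); apply: (rk_pos rk); exact: (hS_in _ rk).
pose J s := BBk K s s - 2 * LS f s.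
have Jlb : forall s, - c2 <= J s.
  move=> s; have := hyp s; have := Bpos s; rewrite /J.
  set L := LS f s; set B := BBk K s s => hB hL.
  have : 0 <= (B - c2) ^+ 2 by exact: sqr_ge0.
  nra.
pose E : set R := [set r : R | exists s, r = J s]%classic.
have En : E !=set0 by exists (J [::]); exists [::].
have Elb : lbound E (- c2) by move=> r [s ->]; exact: Jlb.
have Ehl : has_lbound E by exists (- c2).
pose mu := inf E.
have mu_le : forall s, mu <= J s by move=> s; apply: (ge_inf Ehl); exists s.
have mu_ge : - c2 <= mu by exact: lb_le_inf.
have mu_ad : forall e : R, 0 < e -> exists s, J s < mu + e.
  move=> e ep; have [r [s ->] hr] := inf_adherent ep (conj En Ehl).
  by exists s.
have [sq hsq] : {sq : nat -> seq (R * X) & forall n, J (sq n) < mu + epsn R n}.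
  apply: (@choice _ _ (fun n s => J s < mu + epsn R n)) => n.
  by apply: mu_ad; exact: epsn_gt0.
pose u n := hS K (sq n).
have para : forall s1 s2, BBk K (s1 ++ scaleS (-1) s2) (s1 ++ scaleS (-1) s2)
                         <= 2 * (J s1 - mu) + 2 * (J s2 - mu).
  move=> s1 s2; have := mu_le (scaleS (2^-1) s1 ++ scaleS (2^-1) s2); rewrite /J.
  rewrite !BBk_catl !BBk_catr // !BBk_scalel !BBk_scaler // !LS_cat !LS_scale.
  rewrite (BBk_symm s2 s1) //.
  lra.
have fd : forall s t, fdiff (hS K s) (hS K t) = hS K (s ++ scaleS (-1) t).
  by move=> s t; apply: funext => x; rewrite /fdiff hS_cat hS_scale; ring.
have cauchy : forall e : R, 0 < e -> exists N, forall n k, (N <= n)%N -> (N <= k)%N ->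
    ip (fdiff (u n) (u k)) (fdiff (u n) (u k)) < e.
  move=> e ep; have [N hN] := arch_inv (R := R) (e := e / 4) ltac:(lra).
  exists N => n k hn hk.
  rewrite /u fd (ip_hS_hS _ _ rk).
  apply: le_lt_trans (para _ _) _.
  have := hsq n; have := hsq k; have := inv_mono R hn; have := inv_mono R hk.
  have := mu_le (sq n); have := mu_le (sq k).
  move=> h1 h2 h3 h4 h5 h6; lra.
have [g [Hg conv]] := rk_complete rk (fun n => hS_in (sq n) rk) cauchy.
have Hu : forall n, H (u n) by move=> n; exact: (hS_in _ rk).
have gf : g = f.
  apply: funext => y.
  have HKy : H (fun x => K x y) by exact: (rk_mem rk).
  have kE : ip (fun x => K x y) (fun x => K x y) = K y y by exact: (rk_repr rk).
  set k := K y y in kE.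
  have k0 : 0 <= k by rewrite -kE; exact: (rk_pos rk).
  have key : forall n, (u n y - f y) ^+ 2 <= epsn R n * k.
    move=> n; apply: quad_lemma => // t.
    have := mu_le (sq n ++ [:: (t, y)]); have := hsq n.
    rewrite /J BBk_catl !BBk_catr // BBk_single (BBk_symm (sq n) [:: (t, y)]) //.
    rewrite !BBk_single LS_cat.
    have -> : LS f [:: (t, y)] = t * f y by rewrite /LS big_cons big_nil addr0.
    have -> : hS K [:: (t, y)] y = t * k by rewrite /hS big_cons big_nil addr0.
    rewrite -/(u n) => h1 h2.
    have e1 : t * (t * k) = k * t ^+ 2 by ring.
    have e2 : 2 * (u n y - f y) * t = 2 * (t * u n y) - 2 * (t * f y) by ring.
    rewrite e2; clearbody J mu; lra.
  have key2 : forall n, (u n y - g y) ^+ 2 <= ip (fdiff (u n) g) (fdiff (u n) g) * k.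
    move=> n; have HD := fdiff_in rk (Hu n) Hg.
    have := ip_CS rk HD HKy.
    rewrite (ip_fdiffl rk (Hu n) Hg HKy) !(rk_repr rk) // kE.
  apply/eqP; rewrite -subr_eq0 -sqrf_eq0 eq_le sqr_ge0 andbT.
  apply/ler_addgt0Pr => e ep; rewrite add0r.
  have ep' : 0 < e / (4 * (k + 1)) by apply: divr_gt0 => //; lra.
  have [N1 hN1] := arch_inv ep'.
  have [N2 hN2] := conv _ ep'.
  set n := maxn N1 N2.
  have h1 := key n; have h2 := key2 n.
  have h3 := hN2 n (leq_maxr N1 N2).
  have h4 := inv_mono R (leq_maxl N1 N2 : (N1 <= n)%N).
  set e' := e / (4 * (k + 1)) in ep' hN1 h3.
  have hw : (g y - f y) ^+ 2 <= 2 * (u n y - f y) ^+ 2 + 2 * (u n y - g y) ^+ 2.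
    have : 0 <= (2 * u n y - f y - g y) ^+ 2 by exact: sqr_ge0.
    set a := u n y; set b := f y; set c := g y.
    have -> : (2 * a - b - c) ^+ 2 = 2 * (a - b) ^+ 2 + 2 * (a - c) ^+ 2 - (c - b) ^+ 2 by ring.
    lra.
  set dd := ip (fdiff (u n) g) (fdiff (u n) g) in h2 h3.
  have h5 : epsn R n * k <= e' * k by apply: ler_wpM2r => //; lra.
  have h6 : dd * k <= e' * k by apply: ler_wpM2r => //; lra.
  have h7 : e' * (4 * (k + 1)) = e by rewrite /e'; field; lra.
  have h8 : e' * k <= e' * (k + 1) by apply: ler_wpM2l; lra.
  clearbody J mu; lra.
have Hf : H f by rewrite -gf.
split => //.
apply/ler_addgt0Pr => e ep.
have [N hN] := conv e ep; have := hN N (leqnn N); rewrite gf.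
have HD := fdiff_in rk (Hu N) Hf.
rewrite (ip_fdiffl rk (Hu N) Hf HD).
rewrite (rk_sym rk (Hu N) HD) (rk_sym rk Hf HD).
rewrite !(ip_fdiffl rk (Hu N) Hf) //.
rewrite (rk_sym rk Hf (Hu N)) /u (ip_hS_hS _ _ rk) (ip_hS _ rk Hf).
have := mu_le (sq N); rewrite /J /LS.
clearbody mu; lra.
Qed.

Local Close Scope classical_set_scope.

Lemma base_ineq (R : realType) (X : Type) K1 H1 ip1 K2 H2 ip2 (c2 : R) :
  is_RKHS K1 H1 ip1 -> is_RKHS K2 H2 ip2 -> (forall f : X -> R, H1 f -> H2 f) ->
  0 <= c2 -> (forall f, H1 f -> ip2 f f <= c2 * ip1 f f) ->
  psdK (fun x y => c2 * K2 x y - K1 x y).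
Proof.
move=> rk1 rk2 incl c20 hb; split.
  by move=> x y; rewrite (K_sym _ _ rk1) (K_sym _ _ rk2).
move=> s.
have E : BBk (fun x y => c2 * K2 x y - K1 x y) s s = c2 * BBk K2 s s - BBk K1 s s.
  rewrite (BBk_ext _ _ (K' := fun x y => c2 * K2 x y + (-1) * K1 x y)); last by move=> *; ring.
  by rewrite BBk_add !BBk_scale; ring.
rewrite E subr_ge0.
have Hh1 : H1 (hS K1 s) by exact: (hS_in _ rk1).
have Hh1' := incl _ Hh1.
have Hh2 : H2 (hS K2 s) by exact: (hS_in _ rk2).
have Q1 : ip1 (hS K1 s) (hS K1 s) = BBk K1 s s by exact: (ip_hS_hS _ _ rk1).
have Q2 : ip2 (hS K2 s) (hS K2 s) = BBk K2 s s by exact: (ip_hS_hS _ _ rk2).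
have Q12 : ip2 (hS K2 s) (hS K1 s) = BBk K1 s s by rewrite (ip_hS _ rk2 Hh1').
have cs := ip_CS rk2 Hh2 Hh1'.
have hb1 := hb _ Hh1.
have q1 : 0 <= BBk K1 s s by rewrite -Q1; exact: (rk_pos rk1).
have q2 : 0 <= BBk K2 s s by rewrite -Q2; exact: (rk_pos rk2).
rewrite Q12 Q2 in cs; rewrite Q1 in hb1.
have cs2 : BBk K1 s s ^+ 2 <= BBk K2 s s * (c2 * BBk K1 s s).
  by apply: le_trans cs _; apply: ler_wpM2l.
set a := BBk K1 s s in cs2 q1 *; set b := BBk K2 s s in cs2 q2 *.
have [az|anz] := eqVneq a 0; first by rewrite az mulr_ge0.
have ap : 0 < a by rewrite lt_def anz q1.
have h : a * a <= a * (c2 * b).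
  have -> : a * (c2 * b) = b * (c2 * a) by ring.
  by rewrite -expr2.
by rewrite ler_pM2l in h.
Qed.

Lemma ip_scale0 (R : realType) (X : Type) K H (ip : (X -> R) -> (X -> R) -> R) a f :
  is_RKHS K H ip -> H f ->
  ip (fun x => a * f x + 0) (fun x => a * f x + 0) = a ^+ 2 * ip f f.
Proof.
move=> rk Hf; have Hz := rk_zero rk.
have Hg : H (fun x => a * f x + 0) := rk_lin rk a Hf Hz.
rewrite (rk_linl rk a Hf Hz Hg) (ip0l rk Hg) (ip_linr a rk Hf Hz Hf).
rewrite (rk_sym rk Hf Hz) (ip0l rk Hf); ring.
Qed.

Lemma C_scale (R : realType) (D : Type) (Km Kup : D -> D -> R) Hm Hup ipm ipup (C : R) :
  is_RKHS Km Hm ipm -> is_RKHS Kup Hup ipup -> (forall f, Hm f -> Hup f) -> 0 < C ->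
  (forall f, Hm f -> rk_norm ipm f <= 1 -> rk_norm ipup f <= C) ->
  forall f, Hm f -> ipup f f <= C ^+ 2 * ipm f f.
Proof.
move=> rkm rkup incl Cp Cb f Hf.
have r0 : 0 <= ipm f f by exact: (rk_pos rkm).
have [rz|rnz] := eqVneq (ipm f f) 0.
  have -> := rk_def rkm Hf rz.
  by rewrite (ip0l rkup (rk_zero rkup)) (ip0l rkm (rk_zero rkm)) mulr0.
have rp : 0 < ipm f f by rewrite lt_def rnz r0.
set r := ipm f f in r0 rnz rp *.
have sp : 0 < Num.sqrt r by rewrite sqrtr_gt0.
set a := (Num.sqrt r)^-1.
have Hg : Hm (fun x => a * f x + 0) := rk_lin rkm a Hf (rk_zero rkm).
have a2r : a ^+ 2 * r = 1.
  by rewrite /a exprVn sqr_sqrtr // mulVf.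
have := Cb _ Hg.
rewrite /rk_norm (ip_scale0 a rkm Hf) a2r sqrtr1 lexx => /(_ isT) h.
have Hg' := incl _ Hg.
have g0 : 0 <= ipup (fun x => a * f x + 0) (fun x => a * f x + 0) by exact: (rk_pos rkup).
have h2 : ipup (fun x => a * f x + 0) (fun x => a * f x + 0) <= C ^+ 2.
  by rewrite -(sqr_sqrtr g0) lerXn2r // ?nnegrE ?sqrtr_ge0 // ltW.
rewrite (ip_scale0 a rkup (incl _ Hf)) in h2.
have ha : 0 < a ^+ 2 by rewrite exprn_gt0 // invr_gt0.
have e : ipup f f = r * (a ^+ 2 * ipup f f) by rewrite mulrA [r * _]mulrC a2r mul1r.
rewrite e mulrC; apply: ler_wpM2r => //; lra.
Qed.

Lemma M2_expand (R : realType) (D : Type) d (eta : {set 'I_d} -> R) (mup : D -> D -> R) (C : R) x y :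
  M_kernel (T_up C eta) mup x y =
  \sum_(v : {set 'I_d}) eta v * \prod_(j in v) (C ^+ 2 * (1 + mup (x j) (y j))).
Proof.
rewrite /M_kernel /T_up /prod_kernel.
under eq_bigr => u _ do rewrite mulr_suml big_mkcond.
rewrite exchange_big /=; apply: eq_bigr => v _.
rewrite -big_mkcond /= -mulr_sumr big_split /= prodr_const prod1D exprM; ring.
Qed.

Unset Implicit Arguments.

Theorem mainTheorem14 (R : realType) (D : Type) (hD : inhabited D) (d : nat)
  (m mup : D -> D -> R) (C : R) (eta : {set 'I_d} -> R)
  (Hm Hup : (D -> R) -> Prop) (ipm ipup : (D -> R) -> (D -> R) -> R)
  (H1 H2 : (('I_d -> D) -> R) -> Prop)
  (ip1 ip2 : (('I_d -> D) -> R) -> (('I_d -> D) -> R) -> R)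
  (* (A1) *)
  (km : reproducing_kernel m) (kup : reproducing_kernel mup)
  (m_nz : exists x y, m x y <> 0) (mup_nz : exists x y, mup x y <> 0)
  (rkm : is_RKHS m Hm ipm)
  (rkup : is_RKHS (fun x y => 1 + mup x y) Hup ipup)
  (incl : forall f, Hm f -> Hup f)
  (C_pos : 0 < C)
  (C_bound : forall f, Hm f -> rk_norm ipm f <= 1 -> rk_norm ipup f <= C)
  (* (A2) *)
  (eta_S : in_S C eta)
  (* the two RKHSs H(M^{eta,m}) and H(M^{eta^up,m^up}) with eta^up = T^up eta *)
  (rk1 : is_RKHS (M_kernel eta m) H1 ip1)
  (rk2 : is_RKHS (M_kernel (T_up C eta) mup) H2 ip2) :
  (forall f, H1 f -> H2 f) /\
  (forall f, H1 f -> rk_norm ip2 f <= rk_norm ip1 f).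
Proof.
have Cs := C_scale rkm rkup incl C_pos C_bound.
have base : psdK (fun s t => C ^+ 2 * (1 + mup s t) - m s t).
  apply: (base_ineq rkm rkup incl) => //; exact: sqr_ge0.
have psdm : psdK m := rkhs_psd rkm.
pose a := fun (j : 'I_d) (x y : 'I_d -> D) => m (x j) (y j).
pose b := fun (j : 'I_d) (x y : 'I_d -> D) => C ^+ 2 * (1 + mup (x j) (y j)).
have ha : forall j, psdK (a j) by move=> j; exact: (psdK_coord j psdm).
have hb : forall j, psdK (fun x y => b j x y - a j x y).
  by move=> j; exact: (psdK_coord j base).
have hdiff : psdK (fun x y => M_kernel (T_up C eta) mup x y - M_kernel eta m x y).
  have hv : forall v : {set 'I_d}, psdK (fun x y => eta v *
      (\prod_(j <- index_enum 'I_d | j \in v) b j x y - \prod_(j <- index_enum 'I_d | j \in v) a j x y)).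
    move=> v; apply: psdK_scale; first exact: eta_S.
    exact: (psdK_prod (index_enum 'I_d) (fun j => j \in v) ha hb).2.
  apply: psdK_ext (psdK_sum (index_enum _) xpredT hv) => x y.
  rewrite M2_expand /M_kernel /prod_kernel -sumrB; apply: eq_bigr => v _.
  by rewrite mulrBr.
have key : forall f, H1 f -> H2 f /\ ip2 f f <= ip1 f f.
  move=> f Hf; apply: (rkhs_char rk2); first exact: (rk_pos rk1).
  move=> s.
  have Hh := hS_in s rk1.
  have e1 : LS f s = ip1 (hS (M_kernel eta m) s) f by rewrite (ip_hS _ rk1 Hf).
  have cs := ip_CS rk1 Hh Hf.
  rewrite (ip_hS_hS _ _ rk1) in cs.
  have d0 := hdiff.2 s.
  have E : BBk (fun x y => M_kernel (T_up C eta) mup x y - M_kernel eta m x y) s s =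
           BBk (M_kernel (T_up C eta) mup) s s - BBk (M_kernel eta m) s s.
    rewrite (BBk_ext _ _ (K' := fun x y => M_kernel (T_up C eta) mup x y + (-1) * M_kernel eta m x y)); last by move=> *; ring.
    by rewrite BBk_add BBk_scale; ring.
  rewrite E subr_ge0 in d0.
  rewrite e1; apply: le_trans cs _; rewrite mulrC; apply: ler_wpM2l => //.
  exact: (rk_pos rk1).
split; first by move=> f /key [].
move=> f Hf; have [_ h] := key f Hf; rewrite /rk_norm ler_sqrt //; exact: (rk_pos rk1 Hf).
Qed.
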